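(* Let $\mathbf S=\langle S,+,0,\mathscr F\rangle$ be a semilattice with operators, let $I$ be an arbitrary index set, and let $\chi,\gamma$ and $\zeta_i$ ($i\in I$) be congruences on $\mathbf S$. For $\theta\in\operatorname{Con}\mathbf S$ let $\eta(\theta)$ and $\tau(\theta)$ be the least and greatest congruences with the same $0$-class as $\theta$. If $\eta(\chi)\le\gamma$ and $\bigwedge_{i\in I}\tau(\zeta_i)\le\tau(\gamma)$, then \[ \eta\Big(\eta(\chi)\vee\bigwedge_{i\in I}\tau(\chi\wedge\zeta_i)\Big)\le\gamma. \]
   Context: A semilattice with operators is a join semilattice $(S,+)$ with least element $0$ together with a set $\mathscr F$ of unary maps preserving $+$ and $0$; congruences are equivalence relations compatible with $+$ and all $f\in\mathscr F$, ordered by inclusion. If $J$ is the $0$-class of $\theta$, then $x\,\eta(\theta)\,y$ iff $x+j=y+j$ for some $j\in J$, and $x\,\tau(\theta)\,y$ iff for every $h$ in the monoid generated by $\mathscr F$ (including the identity), $h(x)\in J\Leftrightarrow h(y)\in J$. *)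

(* Defs.v *)
Record slo := SLO {
  car :> Type;
  sjoin : car -> car -> car;
  szero : car;
  sops : (car -> car) -> Prop;
  sjoin_assoc : forall x y z, sjoin x (sjoin y z) = sjoin (sjoin x y) z;
  sjoin_comm : forall x y, sjoin x y = sjoin y x;
  sjoin_idem : forall x, sjoin x x = x;
  szero_least : forall x, sjoin szero x = x;
  sops_join : forall f, sops f -> forall x y, f (sjoin x y) = sjoin (f x) (f y);
  sops_zero : forall f, sops f -> f szero = szero
}.

Definition rel (S : slo) := S -> S -> Prop.

Definition is_cong (S : slo) (t : rel S) : Prop :=
  (forall x, t x x) /\
  (forall x y, t x y -> t y x) /\
  (forall x y z, t x y -> t y z -> t x z) /\
  (forall x y x' y', t x y -> t x' y' -> t (sjoin S x x') (sjoin S y y')) /\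
  (forall f, sops S f -> forall x y, t x y -> t (f x) (f y)).

Definition cle (S : slo) (t u : rel S) : Prop := forall x y, t x y -> u x y.

Definition cmeet2 (S : slo) (t u : rel S) : rel S := fun x y => t x y /\ u x y.
Definition cbigmeet (S : slo) (I : Type) (t : I -> rel S) : rel S :=
  fun x y => forall i, t i x y.

Definition cjoin (S : slo) (t u : rel S) : rel S :=
  fun x y => forall p, is_cong S p -> cle S t p -> cle S u p -> p x y.

Inductive in_monoid (S : slo) : (S -> S) -> Prop :=
| mon_id : in_monoid S (fun x => x)
| mon_comp : forall f h, sops S f -> in_monoid S h -> in_monoid S (fun x => f (h x)).

Definition eta (S : slo) (t : rel S) : rel S :=
  fun x y => exists j, t j (szero S) /\ sjoin S x j = sjoin S y j.

Definition tau (S : slo) (t : rel S) : rel S :=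
  fun x y => forall h, in_monoid S h -> (t (h x) (szero S) <-> t (h y) (szero S)).

(* Main.v *)
Require Import Defs.
From Stdlib Require Import Setoid.

Section Aux.
Variable S : slo.
Notation "x + y" := (sjoin S x y).
Notation "0" := (szero S).

Lemma add0r (x : S) : x + 0 = x.
Proof. rewrite sjoin_comm. apply szero_least. Qed.

Lemma mon_join h : in_monoid S h -> forall x y, h (x + y) = h x + h y.
Proof. induction 1; intros; simpl; auto. rewrite IHin_monoid. apply sops_join; auto. Qed.

Lemma mon_zero h : in_monoid S h -> h 0 = 0.
Proof. induction 1; simpl; auto. rewrite IHin_monoid. apply sops_zero; auto. Qed.

Lemma mon_cong t h : is_cong S t -> in_monoid S h -> forall x y, t x y -> t (h x) (h y).
Proof. intros Ht; induction 1; intros; simpl; auto.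
  destruct Ht as (_&_&_&_&Hf). apply Hf; auto. Qed.

Lemma mon_pre h f : in_monoid S h -> sops S f -> in_monoid S (fun x => h (f x)).
Proof. induction 1; intros Hf.
  - change (in_monoid S (fun x => f ((fun y => y) x))). constructor; auto. constructor.
  - change (in_monoid S (fun x => f0 ((fun y => h (f y)) x))). constructor; auto.
Qed.

Lemma ideal t : is_cong S t -> forall a b, t (a + b) 0 <-> (t a 0 /\ t b 0).
Proof. intros Ht a b. destruct Ht as (Hr&Hs&Htr&Hj&_). split.
  - intros H. split.
    + apply Htr with (a + (a + b)).
      * rewrite <- (add0r a) at 1. apply Hj; auto.
      * rewrite sjoin_assoc, sjoin_idem. auto.
    + apply Htr with (b + (a + b)).
      * rewrite <- (add0r b) at 1. apply Hj; auto.
      * rewrite (sjoin_comm _ a b), sjoin_assoc, sjoin_idem. rewrite sjoin_comm. auto.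
  - intros [H1 H2]. rewrite <- (add0r 0). apply Hj; [exact H1|exact H2].
Qed.

Lemma tau_join t : is_cong S t -> forall x y x' y', tau S t x y -> tau S t x' y' ->
  tau S t (x + x') (y + y').
Proof. intros Ht x y x' y' H H' h Hh. rewrite !(mon_join h Hh), !(ideal t Ht).
  specialize (H h Hh). specialize (H' h Hh). tauto. Qed.

Lemma tau_op t : is_cong S t -> forall f, sops S f -> forall x y, tau S t x y ->
  tau S t (f x) (f y).
Proof. intros Ht f Hf x y H h Hh. apply (H (fun z => h (f z))). apply mon_pre; auto. Qed.

Lemma meet_cong t u : is_cong S t -> is_cong S u -> is_cong S (cmeet2 S t u).
Proof. intros (a1&a2&a3&a4&a5) (b1&b2&b3&b4&b5). unfold cmeet2.
  repeat split; firstorder. Qed.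

End Aux.

Theorem theorem7p1 (S : slo) (I : Type) (chi gamma : rel S) (zeta : I -> rel S)
  (Hchi : is_cong S chi) (Hgamma : is_cong S gamma)
  (Hzeta : forall i, is_cong S (zeta i))
  (H1 : cle S (eta S chi) gamma)
  (H2 : cle S (cbigmeet S I (fun i => tau S (zeta i))) (tau S gamma)) :
  cle S (eta S (cjoin S (eta S chi)
                  (cbigmeet S I (fun i => tau S (cmeet2 S chi (zeta i))))))
        gamma.
Proof.
  set (p := fun x y => exists c, chi c (szero S) /\
      forall i, tau S (cmeet2 S chi (zeta i)) (sjoin S x c) (sjoin S y c)).
  assert (Hm : forall i, is_cong S (cmeet2 S chi (zeta i))) by (intro; apply meet_cong; auto).
  assert (Hchi0 : forall c c', chi c (szero S) -> chi c' (szero S) ->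
           chi (sjoin S c c') (szero S)).
  { intros c c' a b. apply (ideal S chi Hchi); auto. }
  assert (Hp : is_cong S p).
  { repeat split.
    - intros x. exists (szero S). split. destruct Hchi as (r&_); apply r.
      intros i h _. tauto.
    - intros x y (c&Hc&H). exists c. split; auto. intros i h Hh.
      specialize (H i h Hh). tauto.
    - intros x y z (c&Hc&H) (c'&Hc'&H'). exists (sjoin S c c'). split; auto.
      intros i h Hh.
      assert (R : forall a, tau S (cmeet2 S chi (zeta i)) a a) by (intros a g _; tauto).
      assert (A := tau_join S _ (Hm i) _ _ _ _ (H i) (R c') h Hh).
      assert (B := tau_join S _ (Hm i) _ _ _ _ (H' i) (R c) h Hh).
      rewrite <- !sjoin_assoc in A. rewrite <- !sjoin_assoc in B.
      rewrite (sjoin_comm S c' c) in B. tauto.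
    - intros x y x' y' (c&Hc&H) (c'&Hc'&H'). exists (sjoin S c c'). split; auto.
      intros i h Hh.
      assert (A := tau_join S _ (Hm i) _ _ _ _ (H i) (H' i) h Hh).
      assert (E : forall a b, sjoin S (sjoin S a b) (sjoin S c c') =
                             sjoin S (sjoin S a c) (sjoin S b c')).
      { intros a b. rewrite <- !sjoin_assoc. f_equal.
        rewrite !sjoin_assoc. f_equal. apply sjoin_comm. }
      rewrite !E. exact A.
    - intros f Hf x y (c&Hc&H). exists (f c). split.
      + rewrite <- (sops_zero S f Hf). destruct Hchi as (_&_&_&_&o). apply o; auto.
      + intros i. rewrite <- !(sops_join S f Hf). apply tau_op; auto. }
  intros x y (j & Hj & Exy).
  assert (Pj : p j (szero S)).
  { apply Hj; auto.
    - intros a b (c&Hc&E). exists c. split; auto. rewrite E. intros i h _. tauto.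
    - intros a b H. exists (szero S). split. destruct Hchi as (r&_); apply r.
      rewrite !add0r. exact H. }
  destruct Pj as (c & Hc & Hcj).
  rewrite szero_least in Hcj.
  assert (Gc : gamma c (szero S)).
  { apply H1. exists c. split; auto. rewrite sjoin_idem, szero_least. auto. }
  assert (T : tau S gamma (sjoin S j c) c).
  { apply H2. intros i h Hh. specialize (Hcj i h Hh). unfold cmeet2 in Hcj.
    rewrite (mon_join S h Hh), (ideal S _ (Hzeta i)).
    assert (chi (h c) (szero S)).
    { rewrite <- (mon_zero S h Hh). apply (mon_cong S chi h Hchi Hh); auto. }
    split; [tauto|]. intro Z. destruct Hcj as [_ Hb].
    destruct (Hb (conj H Z)) as [_ W].
    rewrite (mon_join S h Hh), (ideal S _ (Hzeta i)) in W. tauto. }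
  assert (Gjc : gamma (sjoin S j c) (szero S)) by (apply (T _ (mon_id S)); auto).
  apply (ideal S gamma Hgamma) in Gjc. destruct Gjc as [Gj _].
  destruct Hgamma as (r&s&tr&jn&_).
  apply tr with (sjoin S x j).
  - rewrite <- (add0r S x) at 1. apply jn; auto.
  - rewrite Exy. rewrite <- (add0r S y) at 2. apply jn; auto.
Qed.
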